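(* Let $(A,\mu,\alpha,\beta)$ be a BiHom-associative algebra and $R:A\to A$ an $\alpha\beta$-Rota-Baxter operator. Let $\eta:A\to A$ be an algebra map commuting with $\alpha$, $\beta$ and $R$. Define $x\prec y=\alpha\beta(x)R(\eta(y))$ and $x\succ y=R(x)\alpha\beta\eta(y)$ for $x,y\in A$. Then $(A,\prec,\succ,\alpha^2\beta,\alpha\beta^2\eta)$ is a BiHom-dendriform algebra.
   Context: A BiHom-associative algebra $(A,\mu,\alpha,\beta)$: linear space with bilinear $\mu(x\otimes y)=xy$ and linear maps $\alpha,\beta$ with $\alpha\beta=\beta\alpha$, both multiplicative, and $\alpha(x)(yz)=(xy)\beta(z)$ for all $x,y,z$. An $\alpha\beta$-Rota-Baxter operator is a linear map $R$ commuting with $\alpha$ and $\beta$ such that $R(\alpha\beta(a))R(\alpha\beta(b))=R\big(\alpha\beta(a)R(b)+R(a)\alpha\beta(b)\big)$ for all $a,b$. A BiHom-dendriform algebra $(A,\prec,\succ,\alpha',\beta')$: bilinear $\prec,\succ$ and commuting linear maps $\alpha',\beta'$ multiplicative for both operations such that $(x\prec y)\prec\beta'(z)=\alpha'(x)\prec(y\prec z+y\succ z)$, $(x\succ y)\prec\beta'(z)=\alpha'(x)\succ(y\prec z)$, $\alpha'(x)\succ(y\succ z)=(x\prec y+x\succ y)\succ\beta'(z)$. *)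

(* Defs.v *)
From HB Require Import structures.
From mathcomp Require Import all_boot all_order all_algebra.
Set Implicit Arguments. Unset Strict Implicit. Unset Printing Implicit Defensive.
Import GRing.Theory.
Local Open Scope ring_scope.

Definition is_linear (K : fieldType) (A : lmodType K) (f : A -> A) : Prop :=
  forall (a : K) (x y : A), f (a *: x + y) = a *: f x + f y.

Definition is_bilinear (K : fieldType) (A : lmodType K) (m : A -> A -> A) : Prop :=
  (forall x : A, is_linear (m x)) /\ (forall y : A, is_linear (fun x => m x y)).

Definition multiplicative_for (A : Type) (m : A -> A -> A) (f : A -> A) : Prop :=
  forall x y : A, f (m x y) = m (f x) (f y).

Definition commute_maps (A : Type) (f g : A -> A) : Prop :=
  forall x : A, f (g x) = g (f x).

Definition BiHomAssociative (K : fieldType) (A : lmodType K)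
  (mu : A -> A -> A) (alpha beta : A -> A) : Prop :=
  [/\ is_bilinear mu, is_linear alpha /\ is_linear beta,
      commute_maps alpha beta,
      multiplicative_for mu alpha /\ multiplicative_for mu beta &
      forall x y z : A, mu (alpha x) (mu y z) = mu (mu x y) (beta z)].

Definition ab_RotaBaxter (K : fieldType) (A : lmodType K)
  (mu : A -> A -> A) (alpha beta R : A -> A) : Prop :=
  [/\ is_linear R, commute_maps R alpha, commute_maps R beta &
      forall a b : A,
        mu (R (alpha (beta a))) (R (alpha (beta b)))
        = R (mu (alpha (beta a)) (R b) + mu (R a) (alpha (beta b)))].

Definition algebra_map (K : fieldType) (A : lmodType K)
  (mu : A -> A -> A) (eta : A -> A) : Prop :=
  is_linear eta /\ multiplicative_for mu eta.

Definition BiHomDendriform (K : fieldType) (A : lmodType K)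
  (prec succ : A -> A -> A) (alpha' beta' : A -> A) : Prop :=
  [/\ is_bilinear prec /\ is_bilinear succ,
      is_linear alpha' /\ is_linear beta',
      commute_maps alpha' beta',
      [/\ multiplicative_for prec alpha', multiplicative_for succ alpha',
          multiplicative_for prec beta' & multiplicative_for succ beta'] &
      [/\ forall x y z : A,
            prec (prec x y) (beta' z) = prec (alpha' x) (prec y z + succ y z),
          forall x y z : A,
            prec (succ x y) (beta' z) = succ (alpha' x) (prec y z) &
          forall x y z : A,
            succ (alpha' x) (succ y z) = succ (prec x y + succ x y) (beta' z)]].

(* Main.v *)
Require Import Defs.
From mathcomp Require Import all_boot all_order all_algebra.
Import GRing.Theory.
Local Open Scope ring_scope.

Lemma lin_add (K : fieldType) (A : lmodType K) (f : A -> A) :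
  is_linear f -> forall x y, f (x + y) = f x + f y.
Proof. by move=> H x y; have := H 1 x y; rewrite !scale1r. Qed.

Theorem mainTheorem7 (K : fieldType) (A : lmodType K)
  (mu : A -> A -> A) (alpha beta R eta : A -> A) :
  BiHomAssociative mu alpha beta ->
  ab_RotaBaxter mu alpha beta R ->
  algebra_map mu eta ->
  commute_maps eta alpha -> commute_maps eta beta -> commute_maps eta R ->
  BiHomDendriform
    (fun x y => mu (alpha (beta x)) (R (eta y)))
    (fun x y => mu (R x) (alpha (beta (eta y))))
    (fun x => alpha (alpha (beta x)))
    (fun x => alpha (beta (beta (eta x)))).
Proof.
move=> [[Hml Hmr] [La Lb] Hab [Ma Mb] As] [LR HRa HRb RB] [Le Me] Hea Heb HeR.
have Ae := @lin_add _ _ _ Le.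
have lin_comp : forall f g : A -> A, is_linear f -> is_linear g -> is_linear (fun x => f (g x)).
  by move=> f g Hf Hg a x y; rewrite Hg Hf.
have com : forall f g h : A -> A, commute_maps f h -> commute_maps g h ->
   commute_maps (fun x => f (g x)) h.
  by move=> f g h H1 H2 x /=; rewrite H2 H1.
split.
- split; split => u a x y /=.
  + by rewrite Le LR Hml.
  + by rewrite Lb La Hmr.
  + by rewrite Le Lb La Hml.
  + by rewrite LR Hmr.
- by split; move=> a u v /=; rewrite ?Le ?Lb ?La.
- by move=> x /=; do 8 rewrite ?Me ?Ma ?Mb ?Hea ?Heb ?HeR ?HRa ?HRb -?Hab.
- split=> x y /=; do 8 rewrite ?Me ?Ma ?Mb ?Hea ?Heb ?HeR ?HRa ?HRb -?Hab //.
- split=> x y z /=.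
  + have h1 := RB (eta y) (eta (eta z)).
    have h2 := As (beta (alpha (alpha (beta x)))) (alpha (beta (R (eta y)))) (R (alpha (beta (eta (eta z))))).
    rewrite !Ae in h1 h2 *; do 8 rewrite ?Me ?Ma ?Mb ?Hea ?Heb ?HeR ?HRa ?HRb -?Hab in h1 h2 *.
    by rewrite -h1 h2.
  + have h2 := As (R (alpha (beta x))) (alpha (beta (eta (alpha (beta y))))) (R (alpha (beta (eta (eta z))))).
    do 8 rewrite ?Me ?Ma ?Mb ?Hea ?Heb ?HeR ?HRa ?HRb -?Hab in h2 *.
    by rewrite h2.
  + have h1 := RB x (eta y).
    have h2 := As (R (alpha (beta x))) (R (alpha (beta (eta y)))) (alpha (alpha (beta (beta (eta (eta z)))))).
    do 8 rewrite ?Me ?Ma ?Mb ?Hea ?Heb ?HeR ?HRa ?HRb -?Hab in h1 h2 *.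
    by rewrite -h1 h2.
Qed.
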